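(* For every $d \in \{2,3,4,5,8,12,16,17,24,32,40,48,80,112\}$, the sequence $\left(\left\lfloor n^8/d \right\rfloor\right)_{n \ge 1}$ is eventually prime-free.
   Context: A sequence $(a_n)_{n\ge 1}$ of positive integers is called eventually prime-free if there exists an index $n_0$ such that $a_n$ is composite for all $n \ge n_0$. (Here, as in the paper, this is understood as: only finitely many terms $a_n$ are prime.) *)

(* Defs.v *)
From mathcomp Require Import all_boot.
Set Implicit Arguments. Unset Strict Implicit. Unset Printing Implicit Defensive.

Definition eventually_prime_free (a : nat -> nat) : Prop :=
  exists n0 : nat, forall n : nat, 1 <= n -> n0 <= n -> ~~ prime (a n).

(* Main.v *)
Require Import Defs.
From mathcomp Require Import all_boot.
From mathcomp Require Import zify.

Definition p8 m a := let b := a * a %% m in let c := b * b %% m in c * c %% m.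

Lemma p8E m a : p8 m a = a ^ 8 %% m.
Proof.
rewrite /p8 [in X in X * X]modnMm modnMm.
congr (_ %% _); rewrite !expnS expn0; lia.
Qed.

Definition good d a :=
  let r := p8 (2 * d) a in
  has (fun s => s * s == r %% d) (iota 0 d) || ~~ odd (r %/ d).

Lemma gen d : 0 < d -> all (good d) (iota 0 (2 * d)) ->
  eventually_prime_free (fun n => n ^ 8 %/ d).
Proof.
move=> d0 H; exists (3 * d) => n n1 Hn.
set N := n ^ 4.
have mE : n ^ 8 = N * N by rewrite /N -expnD.
have HN : n <= N.
  rewrite /N !expnS expn0 muln1.
  by rewrite leq_pmulr // !muln_gt0 n1.
have Ha : n %% (2 * d) \in iota 0 (2 * d) by rewrite mem_iota ltn_mod; lia.
have := allP H _ Ha; rewrite /good p8E modnXm (modn_dvdm _ (dvdn_mull 2 (dvdnn d))).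
rewrite -modn_divl modn2 oddb.
rewrite mE.
have Em := divn_eq (N * N) d.
have Er := ltn_pmod (N * N) d0.
move: ((N * N) %/ d) ((N * N) %% d) Em Er => x r Em Er.
case/orP.
- move/hasP=> [s _ /eqP Hs]; apply/negP => Px.
  have sd : s < d by nia.
  have E : x * d = (N - s) * (N + s) by nia.
  have : x %| (N - s) * (N + s) by rewrite -E dvdn_mulr.
  rewrite Euclid_dvdM // => /orP [] /dvdn_leq => Hl.
  + have : x <= N - s by apply: Hl; lia.
    nia.
  + have : x <= N + s by apply: Hl; lia.
    nia.
- move=> Hodd; apply/negP => Px; case: (even_prime Px) => [x2|]; last by rewrite (negbTE Hodd).
  subst x; nia.
Qed.

Theorem theorem5 (d : nat) :
  d \in [:: 2; 3; 4; 5; 8; 12; 16; 17; 24; 32; 40; 48; 80; 112] ->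
  eventually_prime_free (fun n => n ^ 8 %/ d).
Proof.
have H : all (fun d => (0 < d) && all (good d) (iota 0 (2 * d)))
  [:: 2; 3; 4; 5; 8; 12; 16; 17; 24; 32; 40; 48; 80; 112] by vm_compute.
by move=> /(allP H) /andP [d0 Hd]; apply: gen.
Qed.
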